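(* Let $\mathcal{P}$ be a polyomino with toric ideal $J_{\mathcal{P}}\subset S$, and let $f=f^+-f^-\in J_{\mathcal{P}}$ be a binomial of degree $\ge 3$, with $V_+=\{v\in V(\mathcal{P}): x_v\mid f^+\}$ and $V_-=\{v\in V(\mathcal{P}): x_v\mid f^-\}$. If there exist $p,q\in V_+$ and $r\in V_-$ such that $p,q$ are the diagonal (resp. anti-diagonal) corners of an inner interval of $\mathcal{P}$ and $r$ is one of the anti-diagonal (resp. diagonal) corners of that interval, then $f$ is redundant in $J_{\mathcal{P}}$.
   Context: For $a\in\mathbb{N}^2$ the cell $[a,a+(1,1)]$ has vertices $a,a+(1,0),a+(0,1),a+(1,1)$ and four edges. A polyomino $\mathcal{P}$ is a finite nonempty set of cells such that any two cells are joined by a sequence of cells of $\mathcal{P}$, consecutive ones sharing an edge. $V(\mathcal{P})$ is the union of vertex sets of its cells; $S=\mathbb{K}[x_v\mid v\in V(\mathcal{P})]$, $\mathbb{K}$ a field, standard graded. For $a=(i,j)$, $b=(k,\ell)$, $i<k$, $j<\ell$, $[a,b]$ has diagonal corners $a,b$ and anti-diagonal corners $(i,\ell),(k,j)$; it is an inner interval if all its cells belong to $\mathcal{P}$. Toric ideal: a hole of $\mathcal{P}$ is a finite nonempty set of cells not in $\mathcal{P}$, connected through paths of its own cells (consecutive cells sharing an edge), maximal with these properties. Order $\mathbb{N}^2$ by $(a_1,a_2)<(b_1,b_2)$ iff $a_1<b_1$ or ($a_1=b_1$ and $a_2<b_2$); the lower left corner of a hole is its minimal vertex. Let $\mathcal{H}_1,\dots,\mathcal{H}_r$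 be the holes with lower left corners $(i_k,j_k)$ and $\mathcal{F}_k=\{(i,j)\in V(\mathcal{P}): i\le i_k, j\le j_k\}$. A horizontal edge interval is a set $\{(t,j):i\le t\le k\}$ such that each $\{(t,j),(t+1,j)\}$, $i\le t<k$, is an edge of a cell of $\mathcal{P}$; maximal if not strictly contained in another; vertical ones analogously. Each $a\in V(\mathcal{P})$ lies in a unique maximal horizontal edge interval $H(a)$ and unique maximal vertical one $V(a)$. With variables $h_H$, $v_V$ (one per maximal horizontal/vertical edge interval) and $w_1,\dots,w_r$, define $\varphi(x_a)=h_{H(a)}v_{V(a)}\prod_{k:a\in\mathcal{F}_k}w_k$; $J_{\mathcal{P}}=\ker\varphi$. A binomial $f$ in a binomial ideal $J$ is redundant if it can be expressed as a linear combination (with polynomial coefficients) of binomials in $J$ of lower degree. *)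

(* Defs.v *)
From HB Require Import structures.
From mathcomp Require Import all_boot all_order all_algebra.
From mathcomp Require Import finmap.
From mathcomp.multinomials Require Import monalg.

Set Implicit Arguments.
Unset Strict Implicit.
Unset Printing Implicit Defensive.

Import GRing.Theory.
Local Open Scope fset_scope.
Local Open Scope ring_scope.

(* A cell is identified with its lower left corner a in N^2. *)
Definition cell := (nat * nat)%type.

Definition cell_verts (a : cell) : {fset (nat * nat)} :=
  [fset a; (a.1.+1, a.2); (a.1, a.2.+1); (a.1.+1, a.2.+1)].

Definition Vset (P : {fset cell}) : {fset (nat * nat)} :=
  \bigcup_(a <- P) cell_verts a.

Definition adj (a b : cell) : bool :=
  ((a.1 == b.1) && ((a.2.+1 == b.2) || (b.2.+1 == a.2))) ||
  ((a.2 == b.2) && ((a.1.+1 == b.1) || (b.1.+1 == a.1))).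

Definition cells_connected (C : {fset cell}) : Prop :=
  forall a b, a \in C -> b \in C ->
    exists s : seq cell, [/\ path adj a s, last a s = b & all (mem C) s].

Definition polyomino (P : {fset cell}) : Prop :=
  P != fset0 /\ cells_connected P.

Definition hole_like (P C : {fset cell}) : Prop :=
  [/\ C != fset0, (forall c, c \in C -> c \notin P) & cells_connected C].

Definition is_hole (P C : {fset cell}) : Prop :=
  hole_like P C /\
  (forall D : {fset cell}, hole_like P D -> C `<=` D -> D = C).

Definition hole_list (P : {fset cell}) (hs : seq {fset cell}) : Prop :=
  uniq hs /\ (forall C, C \in hs <-> is_hole P C).

Definition lexlt (a b : nat * nat) : bool :=
  (a.1 < b.1)%N || ((a.1 == b.1) && (a.2 < b.2)%N).
Definition lexmin (a b : nat * nat) := if lexlt b a then b else a.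

Definition llc (C : {fset cell}) : nat * nat :=
  let l := enum_fset (Vset C) in foldr lexmin (head (0%N, 0%N) l) l.

Definition inF (c a : nat * nat) : bool := (a.1 <= c.1)%N && (a.2 <= c.2)%N.

(* {(t,j),(t+1,j)} is an edge of a cell of P *)
Definition hedge (P : {fset cell}) (t j : nat) : bool :=
  ((t, j) \in P) || ((0 < j)%N && ((t, j.-1) \in P)).
(* {(i,t),(i,t+1)} is an edge of a cell of P *)
Definition vedge (P : {fset cell}) (i t : nat) : bool :=
  ((i, t) \in P) || ((0 < i)%N && ((i.-1, t) \in P)).

(* (i,k,j) encodes the set {(t,j) : i <= t <= k} *)
Definition hset (I : nat * nat * nat) : pred (nat * nat) :=
  fun v => (v.2 == I.2) && (I.1.1 <= v.1 <= I.1.2)%N.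
Definition is_hint (P : {fset cell}) (I : nat * nat * nat) : Prop :=
  (I.1.1 <= I.1.2)%N /\ forall t, (I.1.1 <= t < I.1.2)%N -> hedge P t I.2.
Definition is_maxhint (P : {fset cell}) (I : nat * nat * nat) : Prop :=
  is_hint P I /\
  forall I', is_hint P I' -> {subset hset I <= hset I'} -> hset I' =1 hset I.

(* (i,j,l) encodes the set {(i,t) : j <= t <= l} *)
Definition vset (I : nat * nat * nat) : pred (nat * nat) :=
  fun v => (v.1 == I.1.1) && (I.1.2 <= v.2 <= I.2)%N.
Definition is_vint (P : {fset cell}) (I : nat * nat * nat) : Prop :=
  (I.1.2 <= I.2)%N /\ forall t, (I.1.2 <= t < I.2)%N -> vedge P I.1.1 t.
Definition is_maxvint (P : {fset cell}) (I : nat * nat * nat) : Prop :=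
  is_vint P I /\
  forall I', is_vint P I' -> {subset vset I <= vset I'} -> vset I' =1 vset I.

(* variables of the target ring: h_H, v_V, w_k *)
Definition tvar := ((nat * nat * nat) + (nat * nat * nat) + nat)%type.

Notation Sring K P := {malg K[{cmonom (Vset P)}]}.
Notation Tring K := {malg K[{cmonom tvar}]}.

Definition phi_var (K : fieldType) (Hf Vf : nat * nat -> nat * nat * nat)
  (hs : seq {fset cell}) (a : nat * nat) : Tring K :=
  << ucm (inl (inl (Hf a)) : tvar) >> * << ucm (inl (inr (Vf a)) : tvar) >> *
  \prod_(k < size hs | inF (llc (nth fset0 hs k)) a) << ucm (inr (k : nat) : tvar) >>.

Definition phi (K : fieldType) (P : {fset cell}) (Hf Vf : nat * nat -> nat * nat * nat)
  (hs : seq {fset cell}) (g : Sring K P) : Tring K :=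
  \sum_(m <- msupp g)
     g@_m *: \prod_(v : Vset P) (@phi_var K Hf Vf hs (val v)) ^+ (m v).

Definition inJ (K : fieldType) (P : {fset cell}) (Hf Vf : nat * nat -> nat * nat * nat)
  (hs : seq {fset cell}) (g : Sring K P) : bool := @phi K P Hf Vf hs g == 0.

Definition binom (K : fieldType) (I : choiceType) (u w : {cmonom I}) : {malg K[{cmonom I}]} :=
  << u >> - << w >>.
Definition bdeg (I : choiceType) (u w : {cmonom I}) : nat := maxn (mdeg u) (mdeg w).

Definition redundant (K : fieldType) (P : {fset cell}) (Hf Vf : nat * nat -> nat * nat * nat)
  (hs : seq {fset cell}) (f : Sring K P) (d : nat) : Prop :=
  exists s : seq (Sring K P * ({cmonom (Vset P)} * {cmonom (Vset P)})),
    (forall t, t \in s -> @inJ K P Hf Vf hs (@binom K _ t.2.1 t.2.2) /\ (bdeg t.2.1 t.2.2 < d)%N) /\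
    f = \sum_(t <- s) t.1 * @binom K _ t.2.1 t.2.2.

Definition inner_interval (P : {fset cell}) (a b : nat * nat) : Prop :=
  [/\ (a.1 < b.1)%N, (a.2 < b.2)%N &
    forall x y, (a.1 <= x < b.1)%N -> (a.2 <= y < b.2)%N -> (x, y) \in P].

(* Main.v *)
Require Import Defs.
From HB Require Import structures.
From mathcomp Require Import all_boot all_order all_algebra.
From mathcomp Require Import finmap.
From mathcomp.multinomials Require Import monalg.
From mathcomp Require Import zify.

Import GRing.Theory.
Set Implicit Arguments.
Unset Strict Implicit.
Unset Printing Implicit Defensive.
Local Open Scope fset_scope.
Local Open Scope ring_scope.

Lemma in_Vset (P : {fset cell}) x v : x \in P -> v \in cell_verts x -> v \in Vset P.
Proof. by move=> xP vx; apply/bigfcupP; exists x => //; rewrite xP. Qed.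

Lemma Vset_cell (P : {fset cell}) v : v \in Vset P -> exists2 x, x \in P & v \in cell_verts x.
Proof. by case/bigfcupP => x /andP[xP _] vx; exists x. Qed.

Lemma foldr_lexmin (l : seq (nat * nat)) x0 :
  (foldr lexmin x0 l \in x0 :: l) /\ (forall z, z \in l -> ~~ lexlt z (foldr lexmin x0 l)).
Proof.
elim: l => [|y l [IH1 IH2]] /=; first by rewrite mem_seq1.
set m := foldr lexmin x0 l in IH1 IH2 *.
rewrite /lexmin; case: ifP => H.
  split; first by move: IH1; rewrite !inE; case/orP => ->; rewrite ?orbT.
  move=> z; rewrite inE; case/orP => [/eqP ->|/IH2]; move: H; rewrite /lexlt; lia.
split; first by rewrite !inE eqxx orbT.
move=> z; rewrite inE; case/orP => [/eqP ->|/IH2]; move: H; rewrite /lexlt; lia.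
Qed.

Lemma llc_in (C : {fset cell}) : C != fset0 -> llc C \in C.
Proof.
move=> C0.
have [x xC] : exists x, x \in C.
  case/fset0Pn: C0 => x xC; by exists x.
have xV : x \in Vset C by apply: (in_Vset xC); rewrite !inE eqxx.
rewrite /llc; set l := enum_fset (Vset C).
have [H1 H2] := foldr_lexmin l (head (0%N, 0%N) l).
have lV : foldr lexmin (head (0%N, 0%N) l) l \in Vset C.
  move: H1; rewrite inE; case/orP => // /eqP ->.
  have hl : forall s : seq (nat*nat), x \in s -> head (0%N,0%N) s \in s.
    by case=> //= y s' _; rewrite inE eqxx.
  exact: (hl l xV).
move: lV H2; set v := foldr _ _ _ => vV H2.
case/Vset_cell: vV => y yC vy.
have yV : y \in Vset C by apply: (in_Vset yC); rewrite !inE eqxx.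
have := H2 y yV.
move: vy; rewrite !inE => /orP[/orP[/orP[]|]|] /eqP ->; rewrite /lexlt /=;
  try by move=> _ ; rewrite ?yC.
all: lia.
Qed.

Lemma hint_union P (I J : nat * nat * nat) x :
  is_hint P I -> is_hint P J -> hset I x -> hset J x ->
  is_hint P (minn I.1.1 J.1.1, maxn I.1.2 J.1.2, I.2).
Proof.
case: I => [[i1 i2] j]; case: J => [[j1 j2] j'] [/= hI1 hI] [/= hJ1 hJ].
rewrite /hset /= => /andP[/eqP e1 h1] /andP[/eqP e2 h2].
have ej : j' = j by rewrite -e1 -e2.
subst j'; split => /=; first lia.
move=> t ht /=; rewrite -?e1 -?ej in hI hJ *.
case: (ltnP t x.1) => tx.
  case: (leqP i1 t) => ti; first by apply: hI; lia.
  by apply: hJ; lia.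
case: (ltnP t i2) => ti; first by apply: hI; lia.
by apply: hJ; lia.
Qed.

Lemma maxhint_sub P (I J : nat * nat * nat) x :
  is_maxhint P I -> is_hint P J -> hset I x -> hset J x -> {subset hset J <= hset I}.
Proof.
move=> [hI mI] hJ xI xJ.
have hU := hint_union hI hJ xI xJ.
have sU : {subset hset I <= hset (minn I.1.1 J.1.1, maxn I.1.2 J.1.2, I.2)}.
  move=> y; rewrite /hset /in_mem /= => /andP[-> h]; lia.
have eU := mI _ hU sU.
move=> y yJ; rewrite -[y \in _]/(hset I y) -eU.
move: xI xJ yJ; rewrite /hset /in_mem /= => /andP[/eqP e1 _] /andP[/eqP e2 _] /andP[/eqP e3 h].
apply/andP; split; first by rewrite e3 -e2 e1.
lia.
Qed.

Lemma hset_inj (I J : nat * nat * nat) : (I.1.1 <= I.1.2)%N -> (J.1.1 <= J.1.2)%N ->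
  hset I =1 hset J -> I = J.
Proof.
case: I => [[i1 i2] j]; case: J => [[j1 j2] j'] /= h1 h2 e.
have := e (i1, j); rewrite /hset /= eqxx leqnn h1 /= => /esym/andP[/eqP ej hi1].
have := e (i2, j); rewrite /hset /= eqxx leqnn h1 /= => /esym/andP[_ hi2].
have := e (j1, j'); rewrite /hset /= eqxx leqnn h2 /= => /andP[_ hj1].
have := e (j2, j'); rewrite /hset /= eqxx leqnn h2 /= => /andP[_ hj2].
subst j'.
have -> : i1 = j1 by lia.
by have -> : i2 = j2 by lia.
Qed.

Lemma maxhint_eq P (I J : nat * nat * nat) x :
  is_maxhint P I -> is_maxhint P J -> hset I x -> hset J x -> I = J.
Proof.
move=> hI hJ xI xJ.
have s1 := maxhint_sub hI hJ.1 xI xJ.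
have s2 := maxhint_sub hJ hI.1 xJ xI.
apply: hset_inj; [exact: hI.1.1 | exact: hJ.1.1 |].
move=> y; apply/idP/idP; [exact: s2 | exact: s1].
Qed.

Lemma vint_union P (I J : nat * nat * nat) x :
  is_vint P I -> is_vint P J -> vset I x -> vset J x ->
  is_vint P (I.1.1, minn I.1.2 J.1.2, maxn I.2 J.2).
Proof.
case: I => [[j i1] i2]; case: J => [[j' j1] j2] [/= hI1 hI] [/= hJ1 hJ].
rewrite /vset /= => /andP[/eqP e1 h1] /andP[/eqP e2 h2].
have ej : j' = j by rewrite -e1 -e2.
subst j'; split => /=; first lia.
move=> t ht /=; rewrite -?e1 -?ej in hI hJ *.
case: (ltnP t x.2) => tx.
  case: (leqP i1 t) => ti; first by apply: hI; lia.
  by apply: hJ; lia.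
case: (ltnP t i2) => ti; first by apply: hI; lia.
by apply: hJ; lia.
Qed.

Lemma maxvint_sub P (I J : nat * nat * nat) x :
  is_maxvint P I -> is_vint P J -> vset I x -> vset J x -> {subset vset J <= vset I}.
Proof.
move=> [hI mI] hJ xI xJ.
have hU := vint_union hI hJ xI xJ.
have sU : {subset vset I <= vset (I.1.1, minn I.1.2 J.1.2, maxn I.2 J.2)}.
  move=> y; rewrite /vset /in_mem /= => /andP[-> h]; lia.
have eU := mI _ hU sU.
move=> y yJ; rewrite -[y \in _]/(vset I y) -eU.
move: xI xJ yJ; rewrite /vset /in_mem /= => /andP[/eqP e1 _] /andP[/eqP e2 _] /andP[/eqP e3 h].
apply/andP; split; first by rewrite e3 -e2 e1.
lia.
Qed.

Lemma vset_inj (I J : nat * nat * nat) : (I.1.2 <= I.2)%N -> (J.1.2 <= J.2)%N ->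
  vset I =1 vset J -> I = J.
Proof.
case: I => [[j i1] i2]; case: J => [[j' j1] j2] /= h1 h2 e.
have := e (j, i1); rewrite /vset /= eqxx leqnn h1 /= => /esym/andP[/eqP ej hi1].
have := e (j, i2); rewrite /vset /= eqxx leqnn h1 /= => /esym/andP[_ hi2].
have := e (j', j1); rewrite /vset /= eqxx leqnn h2 /= => /andP[_ hj1].
have := e (j', j2); rewrite /vset /= eqxx leqnn h2 /= => /andP[_ hj2].
subst j'.
have -> : i1 = j1 by lia.
by have -> : i2 = j2 by lia.
Qed.

Lemma maxvint_eq P (I J : nat * nat * nat) x :
  is_maxvint P I -> is_maxvint P J -> vset I x -> vset J x -> I = J.
Proof.
move=> hI hJ xI xJ.
have s1 := maxvint_sub hI hJ.1 xI xJ.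
have s2 := maxvint_sub hJ hI.1 xJ xI.
apply: vset_inj; [exact: hI.1.1 | exact: hJ.1.1 |].
move=> y; apply/idP/idP; [exact: s2 | exact: s1].
Qed.

Definition Gv (Hf Vf : nat * nat -> nat * nat * nat) (hs : seq {fset cell})
  (a : nat * nat) : {cmonom tvar} :=
  mmul (mmul (ucm (inl (inl (Hf a)) : tvar)) (ucm (inl (inr (Vf a)) : tvar)))
   (\big[mmul/mone]_(k < size hs | inF (llc (nth fset0 hs k)) a) ucm (inr (k : nat) : tvar)).

Definition Phm (P : {fset cell}) (Hf Vf : nat * nat -> nat * nat * nat) (hs : seq {fset cell})
  (m : {cmonom (Vset P)}) : {cmonom tvar} :=
  \big[mmul/mone]_(v : Vset P) \big[mmul/mone]_(i < m v) Gv Hf Vf hs (val v).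

Lemma malgUM (K : fieldType) (I : choiceType) (m n : {cmonom I}) :
  (<< m >> : {malg K[{cmonom I}]}) * << n >> = << mmul m n >>.
Proof. by rewrite malgM_def fgmulUU mulr1. Qed.

Lemma malgU1 (K : fieldType) (I : choiceType) :
  (<< (mone : {cmonom I}) >> : {malg K[{cmonom I}]}) = 1.
Proof. exact: mpolyC1E. Qed.

Lemma cm_big (I : choiceType) (T : Type) (r : seq T) (Pr : pred T) (F : T -> {cmonom I}) t :
  (\big[mmul/mone]_(i <- r | Pr i) F i) t = (\sum_(i <- r | Pr i) F i t)%N.
Proof.
apply: (big_morph (fun m : {cmonom I} => m t)).
  by move=> x y; rewrite cmM.
by rewrite cm1.
Qed.

Lemma phi_varE (K : fieldType) Hf Vf hs a :
  @phi_var K Hf Vf hs a = << Gv Hf Vf hs a >>.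
Proof.
rewrite /phi_var /Gv -!malgUM.
congr (_ * _).
rewrite (big_morph (fun m : {cmonom tvar} => (<< m >> : Tring K)) (fun x y => esym (@malgUM K tvar x y)) (@malgU1 K tvar)).
by [].
Qed.

Lemma FmE (K : fieldType) P Hf Vf hs (m : {cmonom (Vset P)}) :
  \prod_(v : Vset P) (@phi_var K Hf Vf hs (val v)) ^+ (m v) = << Phm Hf Vf hs m >>.
Proof.
rewrite /Phm (big_morph (fun m : {cmonom tvar} => (<< m >> : Tring K)) (fun x y => esym (@malgUM K tvar x y)) (@malgU1 K tvar)).
apply: eq_bigr => v _.
rewrite (big_morph (fun m : {cmonom tvar} => (<< m >> : Tring K)) (fun x y => esym (@malgUM K tvar x y)) (@malgU1 K tvar)).
by rewrite prodr_const card_ord phi_varE.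
Qed.




Lemma phiEw (K : fieldType) P Hf Vf hs (g : Sring K P) (d : {fset {cmonom (Vset P)}}) :
  msupp g `<=` d -> @phi K P Hf Vf hs g =
  \sum_(m <- d) g@_m *: \prod_(v : Vset P) (@phi_var K Hf Vf hs (val v)) ^+ (m v).
Proof.
move=> le; rewrite /phi [LHS](big_fset_incl _ le) => //= x xd /mcoeff_outdom ->.
by rewrite scale0r.
Qed.

Lemma phiB (K : fieldType) P Hf Vf hs (g1 g2 : Sring K P) :
  @phi K P Hf Vf hs (g1 - g2) = @phi K P Hf Vf hs g1 - @phi K P Hf Vf hs g2.
Proof.
rewrite (phiEw _ _ _ (msuppB_le g1 g2)) (phiEw _ _ _ (fsubsetUl (msupp g1) (msupp g2))).
rewrite (phiEw _ _ _ (fsubsetUr (msupp g1) (msupp g2))) -sumrB.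
by apply: eq_bigr => m _; rewrite mcoeffB scalerBl.
Qed.

Lemma phiU (K : fieldType) P Hf Vf hs (m : {cmonom (Vset P)}) :
  @phi K P Hf Vf hs << m >> = << Phm Hf Vf hs m >>.
Proof. by rewrite /phi msuppU1 big_seq_fset1 mcoeffUU scale1r FmE. Qed.

Lemma phi_binom (K : fieldType) P Hf Vf hs (m n : {cmonom (Vset P)}) :
  @phi K P Hf Vf hs (@binom K _ m n) = << Phm Hf Vf hs m >> - << Phm Hf Vf hs n >>.
Proof. rewrite /binom phiB; congr (_ - _); exact: phiU. Qed.

Lemma inJ_iff (K : fieldType) P Hf Vf hs (m n : {cmonom (Vset P)}) :
  @inJ K P Hf Vf hs (@binom K _ m n) <-> Phm Hf Vf hs m = Phm Hf Vf hs n.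
Proof.
rewrite /inJ phi_binom subr_eq0; split; last by move=> ->.
move/eqP => H.
have h1 : (<< Phm Hf Vf hs m >> : Tring K)@_(Phm Hf Vf hs m) = 1 by rewrite mcoeffU1 eqxx.
have h2 : (<< Phm Hf Vf hs n >> : Tring K)@_(Phm Hf Vf hs m) = (Phm Hf Vf hs n == Phm Hf Vf hs m)%:R
  := mcoeffU1 _ _ _.
have E : 1 = (Phm Hf Vf hs n == Phm Hf Vf hs m)%:R :> K :=
  etrans (esym h1) (etrans (congr1 (mcoeff (Phm Hf Vf hs m)) H) h2).
case: (eqVneq (Phm Hf Vf hs n) (Phm Hf Vf hs m)) => [e|ne]; first exact: esym e.
move: E; rewrite (negbTE ne) => /eqP; by rewrite oner_eq0.
Qed.

Lemma PhmM P Hf Vf hs (m n : {cmonom (Vset P)}) :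
  Phm Hf Vf hs (mmul m n) = mmul (Phm Hf Vf hs m) (Phm Hf Vf hs n).
Proof.
rewrite /Phm -big_split /=; apply: eq_bigr => v _.
by rewrite cmM big_split_ord.
Qed.

Lemma PhmU P Hf Vf hs (v0 : Vset P) :
  Phm Hf Vf hs (ucm v0) = Gv Hf Vf hs (val v0).
Proof.
rewrite /Phm (bigD1 v0) //= cmUU big_ord1 big1 ?mulm1 // => v nv.
by rewrite cmU eq_sym (negbTE nv) big_ord0.
Qed.

Lemma cm_cancel (I : choiceType) (a b c : {cmonom I}) : mmul a b = mmul a c -> b = c.
Proof.
move=> H; apply/eqP/cmP => t; have := congr1 (fun m : {cmonom I} => m t) H.
rewrite /= !cmM; lia.
Qed.


Lemma same_H P (Hf : nat * nat -> nat * nat * nat) (x y : nat*nat) I :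
  (forall a, a \in Vset P -> is_maxhint P (Hf a) /\ hset (Hf a) a) ->
  x \in Vset P -> y \in Vset P -> is_hint P I -> hset I x -> hset I y -> Hf x = Hf y.
Proof.
move=> hHf xV yV hI hx hy.
have [mx hxx] := hHf x xV; have [my hyy] := hHf y yV.
have yx : hset (Hf x) y := maxhint_sub mx hI hxx hx hy.
exact: maxhint_eq mx my yx hyy.
Qed.

Lemma same_V P (Vf : nat * nat -> nat * nat * nat) (x y : nat*nat) I :
  (forall a, a \in Vset P -> is_maxvint P (Vf a) /\ vset (Vf a) a) ->
  x \in Vset P -> y \in Vset P -> is_vint P I -> vset I x -> vset I y -> Vf x = Vf y.
Proof.
move=> hVf xV yV hI hx hy.
have [mx hxx] := hVf x xV; have [my hyy] := hVf y yV.
have yx : vset (Vf x) y := maxvint_sub mx hI hxx hx hy.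
exact: maxvint_eq mx my yx hyy.
Qed.

Lemma sum_cond (n : nat) (A : 'I_n -> bool) (X : 'I_n -> nat) :
  (\sum_(k < n | A k) X k = \sum_(k < n) A k * X k)%N.
Proof.
by rewrite big_mkcond; apply: eq_bigr => k _; case: (A k); rewrite ?mul1n ?mul0n.
Qed.

Lemma sum4 n (A B C D : 'I_n -> bool) (X : 'I_n -> nat) :
  (forall k, A k + B k = C k + D k)%N ->
  (\sum_(k < n | A k) X k + \sum_(k < n | B k) X k =
   \sum_(k < n | C k) X k + \sum_(k < n | D k) X k)%N.
Proof.
move=> h; rewrite (sum_cond A) (sum_cond B) (sum_cond C) (sum_cond D).
transitivity (\sum_(k < n) (A k * X k + B k * X k))%N; first by rewrite big_split.
transitivity (\sum_(k < n) (C k * X k + D k * X k))%N; last by rewrite big_split.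
by apply: eq_bigr => k _; rewrite -!mulnDl h.
Qed.

Lemma Weq n (A B C D : 'I_n -> bool) (F : 'I_n -> {cmonom tvar}) :
  (forall k, A k + B k = C k + D k)%N ->
  mmul (\big[mmul/mone]_(k < n | A k) F k) (\big[mmul/mone]_(k < n | B k) F k) =
  mmul (\big[mmul/mone]_(k < n | C k) F k) (\big[mmul/mone]_(k < n | D k) F k).
Proof.
move=> h; apply/eqP/cmP => t; rewrite !cmM !cm_big.
exact: sum4.
Qed.

Definition Wf (hs : seq {fset cell}) (x : nat * nat) : {cmonom tvar} :=
  \big[mmul/mone]_(k < size hs | inF (llc (nth fset0 hs k)) x) ucm (inr (k : nat) : tvar).

Lemma GvE Hf Vf hs x : Gv Hf Vf hs x =
  mmul (mmul (ucm (inl (inl (Hf x)) : tvar)) (ucm (inl (inr (Vf x)) : tvar))) (Wf hs x).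
Proof. by []. Qed.

Lemma corner_V P a1 a2 b1 b2 :
  inner_interval P (a1, a2) (b1, b2) ->
  [/\ (a1, a2) \in Vset P, (b1, b2) \in Vset P, (a1, b2) \in Vset P & (b1, a2) \in Vset P].
Proof.
move=> [/= hab1 hab2 hin]; split.
- apply: (in_Vset (x := (a1, a2))); first by apply: hin; lia.
  rewrite /cell_verts !inE !xpair_eqE /=; lia.
- apply: (in_Vset (x := (b1.-1, b2.-1))); first by apply: hin; lia.
  rewrite /cell_verts !inE !xpair_eqE /=; lia.
- apply: (in_Vset (x := (a1, b2.-1))); first by apply: hin; lia.
  rewrite /cell_verts !inE !xpair_eqE /=; lia.
- apply: (in_Vset (x := (b1.-1, a2))); first by apply: hin; lia.
  rewrite /cell_verts !inE !xpair_eqE /=; lia.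
Qed.

Lemma corner_eq P hs Hf Vf a1 a2 b1 b2 :
  hole_list P hs ->
  (forall a, a \in Vset P -> is_maxhint P (Hf a) /\ hset (Hf a) a) ->
  (forall a, a \in Vset P -> is_maxvint P (Vf a) /\ vset (Vf a) a) ->
  inner_interval P (a1, a2) (b1, b2) ->
  mmul (Gv Hf Vf hs (a1, a2)) (Gv Hf Vf hs (b1, b2)) =
  mmul (Gv Hf Vf hs (a1, b2)) (Gv Hf Vf hs (b1, a2)).
Proof.
move=> hhs hHf hVf hab.
have [AV BV RV SV] := corner_V hab.
move: hab => [/= hab1 hab2 hin].
have eH1 : Hf (a1, a2) = Hf (b1, a2).
  apply: (same_H (I := (a1, b1, a2)) hHf AV SV); rewrite ?/hset /=; try lia.
  split => /=; first lia.
  by move=> t ht; apply/orP; left; apply: hin; lia.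
have eH2 : Hf (b1, b2) = Hf (a1, b2).
  apply: (same_H (I := (a1, b1, b2)) hHf BV RV); rewrite ?/hset /=; try lia.
  split => /=; first lia.
  move=> t ht; apply/orP; right; apply/andP; split; first lia.
  by apply: hin; lia.
have eV1 : Vf (a1, a2) = Vf (a1, b2).
  apply: (same_V (I := (a1, a2, b2)) hVf AV RV); rewrite ?/vset /=; try lia.
  split => /=; first lia.
  by move=> t ht; apply/orP; left; apply: hin; lia.
have eV2 : Vf (b1, b2) = Vf (b1, a2).
  apply: (same_V (I := (b1, a2, b2)) hVf BV SV); rewrite ?/vset /=; try lia.
  split => /=; first lia.
  move=> t ht; apply/orP; right; apply/andP; split; first lia.
  by apply: hin; lia.
have cnt : forall k : 'I_(size hs),
  (inF (llc (nth fset0 hs k)) (a1, a2) + inF (llc (nth fset0 hs k)) (b1, b2) =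
   inF (llc (nth fset0 hs k)) (a1, b2) + inF (llc (nth fset0 hs k)) (b1, a2))%N.
  move=> k; set C := nth fset0 hs k.
  have CH : is_hole P C by apply/hhs.2; apply: mem_nth.
  have [[C0 CP _] _] := CH.
  have cP := CP _ (llc_in C0).
  move: cP; set c := llc C => cP.
  have nin : ~ ((a1 <= c.1 < b1)%N /\ (a2 <= c.2 < b2)%N).
    case=> h1 h2; move: cP; case: (c) h1 h2 => c1 c2 /= h1 h2.
    by rewrite hin.
  rewrite /inF /=; lia.
have WE : mmul (Wf hs (a1, a2)) (Wf hs (b1, b2)) = mmul (Wf hs (a1, b2)) (Wf hs (b1, a2)).
  exact: (Weq (fun k : 'I_(size hs) => ucm (inr (k : nat) : tvar)) cnt).
apply/eqP/cmP => t.
have := congr1 (fun m : {cmonom tvar} => m t) WE.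
rewrite !GvE /= !cmM eH1 eH2 eV1 eV2; lia.
Qed.


Lemma tri (R : zmodType) (a b c : R) : a - c = (a - b) + (b - c).
Proof. by rewrite addrA subrK. Qed.

Lemma binomM (K : fieldType) (I : choiceType) (a b c : {cmonom I}) :
  (<< a >> : {malg K[{cmonom I}]}) * binom K b c = << mmul a b >> - << mmul a c >>.
Proof. rewrite /binom -(malgUM K a b) -(malgUM K a c). exact: mulrBr. Qed.

Lemma final (K : fieldType) P hs Hf Vf (fp fm : {cmonom (Vset P)}) (p q r s0 : Vset P) :
  p != q -> (0 < fp p)%N -> (0 < fp q)%N -> (0 < fm r)%N ->
  mmul (Gv Hf Vf hs (val p)) (Gv Hf Vf hs (val q)) =
    mmul (Gv Hf Vf hs (val r)) (Gv Hf Vf hs (val s0)) ->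
  @inJ K P Hf Vf hs (@binom K _ fp fm) -> (3 <= bdeg fp fm)%N ->
  @redundant K P Hf Vf hs (@binom K _ fp fm) (bdeg fp fm).
Proof.
move=> npq hp hq hr E hJ hd.
set u' := divcm fp (mmul (ucm p) (ucm q)).
set w' := divcm fm (ucm r).
have hu : fp = mmul (mmul (ucm p) (ucm q)) u'.
  apply/eqP/cmP => v; rewrite /u' !cmM divcmE !cmM !cmU.
  have qp : (q == p) = false by rewrite eq_sym; apply/negbTE.
  case: (eqVneq p v) => [<-|pv]; first by rewrite qp; lia.
  case: (eqVneq q v) => [<-|qv]; lia.
have hw : fm = mmul (ucm r) w'.
  apply/eqP/cmP => v; rewrite /w' !cmM divcmE !cmU.
  case: (eqVneq r v) => [<-|rv] /=; [by rewrite (subnKC hr) | by rewrite add0n subn0].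
clearbody u' w'.
have key : Phm Hf Vf hs (mmul (ucm s0) u') = Phm Hf Vf hs w'.
  have := (inJ_iff _ _ _ _ _ _).1 hJ.
  rewrite {1}hu {1}hw !PhmM !PhmU E => H.
  apply: (@cm_cancel _ (Gv Hf Vf hs (val r))).
  by rewrite mulmA.
exists [:: (<< u' >>, (mmul (ucm p) (ucm q), mmul (ucm r) (ucm s0)));
          (<< ucm r >>, (mmul (ucm s0) u', w'))].
split.
  move=> t; rewrite !inE => /orP[/eqP->|/eqP->] /=; split.
  - by apply/inJ_iff; rewrite !PhmM !PhmU.
  - by rewrite /bdeg !mdegM !mdegU.
  - by apply/inJ_iff.
  - have d1 : mdeg fp = (2 + mdeg u')%N by rewrite hu !mdegM !mdegU.
    have d2 : mdeg fm = (1 + mdeg w')%N by rewrite hw mdegM mdegU.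
    move: hd; rewrite /bdeg mdegM mdegU d1 d2; lia.
rewrite big_cons big_seq1.
change (binom K fp fm = << u' >> * binom K (mmul (ucm p) (ucm q)) (mmul (ucm r) (ucm s0)) +
   << ucm r >> * binom K (mmul (ucm s0) u') w').
have e1 : mmul u' (mmul (ucm p) (ucm q)) = mmul (mmul (ucm p) (ucm q)) u' := mulmC _ _.
have e2 : mmul u' (mmul (ucm r) (ucm s0)) = mmul (ucm r) (mmul (ucm s0) u').
  by rewrite (mulmC u'); exact: esym (mulmA _ _ _).
apply: (etrans _ (esym (congr2 +%R (binomM K u' (mmul (ucm p) (ucm q)) (mmul (ucm r) (ucm s0)))
   (binomM K (ucm r) (mmul (ucm s0) u') w')))).
rewrite e1 e2 /binom {1}hu {1}hw.
exact: tri.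
Qed.


Lemma perm4 (I : choiceType) (x y z w : {cmonom I}) :
  mmul x y = mmul z w ->
  [/\ mmul y x = mmul z w, mmul x y = mmul w z, mmul y x = mmul w z,
      mmul z w = mmul x y & [/\ mmul w z = mmul x y, mmul z w = mmul y x & mmul w z = mmul y x]].
Proof.
move=> H.
have hw : forall a b c d : {cmonom I}, (forall t, (a t + b t = c t + d t)%N) -> mmul a b = mmul c d.
  by move=> a b c d h; apply/eqP/cmP => t; rewrite !cmM.
have ht := fun t => congr1 (fun m : {cmonom I} => m t) H.
have {}ht : forall t, (x t + y t = z t + w t)%N by move=> t; have := ht t; rewrite /= !cmM.
split; try split; apply: hw => t; have := ht t; lia.
Qed.

Theorem lemma4p2 (K : fieldType) (P : {fset cell}) (hP : polyomino P)
  (hs : seq {fset cell}) (hhs : hole_list P hs)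
  (Hf Vf : nat * nat -> nat * nat * nat)
  (hHf : forall a, a \in Vset P -> is_maxhint P (Hf a) /\ hset (Hf a) a)
  (hVf : forall a, a \in Vset P -> is_maxvint P (Vf a) /\ vset (Vf a) a)
  (fp fm : {cmonom (Vset P)})
  (hfJ : @inJ K P Hf Vf hs (@binom K _ fp fm))
  (hdeg : (3 <= bdeg fp fm)%N)
  (p q r : Vset P)
  (hp : (0 < fp p)%N) (hq : (0 < fp q)%N) (hr : (0 < fm r)%N)
  (hcorner : exists a b : nat * nat, inner_interval P a b /\
     ( ( (val p = a /\ val q = b \/ val p = b /\ val q = a) /\
         (val r = (a.1, b.2) \/ val r = (b.1, a.2)) )
     \/ ( (val p = (a.1, b.2) /\ val q = (b.1, a.2) \/
           val p = (b.1, a.2) /\ val q = (a.1, b.2)) /\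
          (val r = a \/ val r = b) ) )) :
  @redundant K P Hf Vf hs (@binom K _ fp fm) (bdeg fp fm).
Proof.
case: hcorner => [[a1 a2] [[b1 b2] [hab hc]]].
have [AV BV RV SV] := corner_V hab.
have hce := corner_eq hhs hHf hVf hab.
have [c1 c2 c3 c4 [c5 c6 c7]] := perm4 hce.
case: (hab) => /= hab1 hab2 _.
have neq : forall (x y : Vset P) (u v : nat * nat), val x = u -> val y = v -> u != v -> x != y.
  by move=> x y u v hx hy; apply: contra_neq => e; rewrite -hx -hy e.
have nAB : (a1, a2) != (b1, b2) by apply/eqP => -[e _]; lia.
have nRS : (a1, b2) != (b1, a2) by apply/eqP => -[e _]; lia.
have nBA : (b1, b2) != (a1, a2) by rewrite eq_sym.
have nSR : (b1, a2) != (a1, b2) by rewrite eq_sym.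
have e : forall x : Vset P, val x = fsval x by [].
case: hc => [[[[Hp Hq]|[Hp Hq]] [Hr|Hr]]|[[[Hp Hq]|[Hp Hq]] [Hr|Hr]]]; rewrite /= in Hp Hq Hr.
- apply: (final (s0 := [` SV]) (neq _ _ _ _ Hp Hq nAB) hp hq hr _ hfJ hdeg).
  rewrite !e Hp Hq Hr /=; exact: hce.
- apply: (final (s0 := [` RV]) (neq _ _ _ _ Hp Hq nAB) hp hq hr _ hfJ hdeg).
  rewrite !e Hp Hq Hr /=; exact: c2.
- apply: (final (s0 := [` SV]) (neq _ _ _ _ Hp Hq nBA) hp hq hr _ hfJ hdeg).
  rewrite !e Hp Hq Hr /=; exact: c1.
- apply: (final (s0 := [` RV]) (neq _ _ _ _ Hp Hq nBA) hp hq hr _ hfJ hdeg).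
  rewrite !e Hp Hq Hr /=; exact: c3.
- apply: (final (s0 := [` BV]) (neq _ _ _ _ Hp Hq nRS) hp hq hr _ hfJ hdeg).
  rewrite !e Hp Hq Hr /=; exact: c4.
- apply: (final (s0 := [` AV]) (neq _ _ _ _ Hp Hq nRS) hp hq hr _ hfJ hdeg).
  rewrite !e Hp Hq Hr /=; exact: c6.
- apply: (final (s0 := [` BV]) (neq _ _ _ _ Hp Hq nSR) hp hq hr _ hfJ hdeg).
  rewrite !e Hp Hq Hr /=; exact: c5.
- apply: (final (s0 := [` AV]) (neq _ _ _ _ Hp Hq nSR) hp hq hr _ hfJ hdeg).
  rewrite !e Hp Hq Hr /=; exact: c7.
Qed.
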